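(* Let $\mathcal A=\{a_\alpha:\alpha<\omega_1\}$ (enumerated without repetition) be a near-Luzin almost disjoint family of subsets of a countable set, let $n,k\in\omega$, and let $E$ be an uncountable family of pairwise disjoint $n$-element subsets of $\omega_1$. Then there are $s\neq t$ in $E$ such that $a_\alpha\cap a_\beta\not\subseteq k=\{0,\dots,k-1\}$ for all $\alpha\in s$ and $\beta\in t$.
   Context: An almost disjoint family is a collection of infinite sets whose pairwise intersections are finite. An uncountable almost disjoint family $\mathcal A$ is near-Luzin iff for all uncountable $\mathcal C,\mathcal D\subseteq\mathcal A$ the set $\bigcup\mathcal C\cap\bigcup\mathcal D$ is infinite. The natural number $k$ is identified with $\{0,\dots,k-1\}$ (the underlying countable set is taken to be $\omega$). *)

(* Defs.v *)
From mathcomp Require Import all_boot.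
From mathcomp Require Import boolp classical_sets cardinality.
Set Implicit Arguments. Unset Strict Implicit. Unset Printing Implicit Defensive.
Local Open Scope classical_set_scope.
Local Open Scope card_scope.

(* (I, lt) is (order-isomorphic to) the first uncountable ordinal omega_1:
   a strict well-order, all of whose proper initial segments are countable,
   while the whole carrier is uncountable. *)
Definition omega1_order (I : Type) (lt : I -> I -> Prop) : Prop :=
  [/\ well_founded lt,
      (forall x y z, lt x y -> lt y z -> lt x z),
      (forall x y, x = y \/ lt x y \/ lt y x),
      (forall x, countable [set y | lt y x]) &
      ~ countable [set: I]].

Definition almost_disjoint (A : set (set nat)) : Prop :=
  (forall X, A X -> infinite_set X) /\
  (forall X Y, A X -> A Y -> X <> Y -> finite_set (X `&` Y)).

Definition near_Luzin (A : set (set nat)) : Prop :=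
  ~ countable A /\
  forall C D : set (set nat), C `<=` A -> D `<=` A ->
    ~ countable C -> ~ countable D ->
    infinite_set ((\bigcup_(X in C) X) `&` (\bigcup_(Y in D) Y)).

(* Main.v *)
Require Import Defs.
From mathcomp Require Import all_boot.
From mathcomp Require Import boolp classical_sets cardinality.
From mathcomp Require Import functions.
Local Open Scope classical_set_scope.
Local Open Scope card_scope.

Lemma enum_ex (I : Type) (s : set I) n : s #= `I_n ->
  exists f : I -> nat, [/\ {in s &, injective f}, (forall x, s x -> f x < n)
     & (forall i, i < n -> exists2 x, s x & f x = i)].
Proof.
move=> /pcard_eqP[f]; exists f; split.
- exact: inj.
- by move=> x sx; exact: (@funS _ _ s `I_n f x sx).
- by move=> i ilt; have [x sx <-] := @surj _ _ s `I_n f i ilt; exists x.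
Qed.

Lemma uncountable_ne (T : Type) (A : set T) : ~ countable A -> exists x, A x.
Proof.
move=> nA; apply: contrapT => nx; apply: nA.
suff -> : A = set0 by [].
by apply/seteqP; split => x // Ax; apply: nx; exists x.
Qed.

Lemma countableU2 (T : Type) (A B : set T) :
  countable A -> countable B -> countable (A `|` B).
Proof.
move=> cA cB.
have -> : A `|` B = \bigcup_(b in [set: bool]) (if b then A else B).
  apply/seteqP; split => x.
    by case=> h; [exists true | exists false].
  by case=> -[] _ h; [left | right].
by apply: bigcup_countable => // -[].
Qed.

Lemma key (I : Type) (a : I -> set nat) (k : nat) (X Y : set I) :
  injective a -> near_Luzin (range a) -> ~ countable X -> ~ countable Y ->
  exists x, [/\ k <= x, ~ countable (X `&` [set al | a al x])
                & ~ countable (Y `&` [set al | a al x])].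
Proof.
move=> ainj [_ NL] nX nY.
pose G Z := [set x | countable (Z `&` [set al | a al x])].
pose Z0 Z := Z `\` \bigcup_(x in G Z) (Z `&` [set al | a al x]).
have Z0u Z : ~ countable Z -> ~ countable (Z0 Z).
  move=> nZ cZ; apply: nZ.
  apply: (sub_countable (subset_card_le (B := Z0 Z `|` \bigcup_(x in G Z) (Z `&` [set al | a al x])) _)).
    move=> al Zal; have [h|h] := pselect ((\bigcup_(x in G Z) (Z `&` [set al | a al x])) al).
      by right.
    by left; split.
  apply: countableU2 => //; apply: bigcup_countable => //.
have imu Z : ~ countable Z -> ~ countable (a @` Z).
  move=> nZ cZ; apply: nZ.
  have sub : Z `<=` a @^-1` (a @` Z) by move=> al Zal; exists al.
  apply: (sub_countable (subset_card_le sub)).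
  apply: (sub_countable (card_ge_preimage _)) => //.
  by move=> u v _ _; apply: ainj.
have := NL (a @` Z0 X) (a @` Z0 Y) _ _ (imu _ (Z0u _ nX)) (imu _ (Z0u _ nY)).
have sr Z : a @` Z `<=` range a by move=> _ [al _ <-]; exists al.
move=> /(_ (sr _) (sr _)) inf.
have [x [hx nk]] : exists x, ((\bigcup_(A in a @` Z0 X) A) `&` (\bigcup_(B in a @` Z0 Y) B)) x /\ ~ (x < k).
  apply: contrapT => nx; apply: inf; apply: (sub_finite_set _ (finite_II k)).
  move=> x hx /=; apply: contrapT => h; apply: nx; by exists x.
case: hx => -[_ [al [Xal nGal] <-] alx] [_ [be [Ybe nGbe] <-] bex].
exists x; split.
- by rewrite leqNgt; apply/negP.
- move=> c; apply: nGal; exists x => //.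
- move=> c; apply: nGbe; exists x => //.
Qed.

Theorem lemma1p3 (I : Type) (lt : I -> I -> Prop) (a : I -> set nat)
    (n k : nat) (E : set (set I)) :
  omega1_order lt ->
  injective a ->
  almost_disjoint (range a) ->
  near_Luzin (range a) ->
  ~ countable E ->
  (forall s, E s -> s #= `I_n) ->
  (forall s t, E s -> E t -> s <> t -> s `&` t = set0) ->
  exists s t, [/\ E s, E t, s <> t &
    forall alpha beta, s alpha -> t beta ->
      ~ (a alpha `&` a beta `<=` `I_k)].
Proof.
move=> _ ainj _ NL nE Ecard Edisj.
have [F HF] : exists F : set I -> I -> nat, forall s, E s ->
   [/\ {in s &, injective (F s)}, (forall x, s x -> F s x < n)
     & (forall i, i < n -> exists2 x, s x & F s x = i)].
  suff [F HF] : {F : set I -> I -> nat & forall s, E s ->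
   [/\ {in s &, injective (F s)}, (forall x, s x -> F s x < n)
     & (forall i, i < n -> exists2 x, s x & F s x = i)]} by exists F.
  apply: (@choice _ _ (fun s f => E s -> [/\ {in s &, injective f}, (forall x, s x -> f x < n) & (forall i, i < n -> exists2 x, s x & f x = i)])).
  move=> s; have [Es|nEs] := pselect (E s).
    by have [f hf] := @enum_ex _ _ _ (Ecard s Es); exists f.
  by exists (fun _ => 0%N).
pose good (E1 E2 : set (set I)) (i j : nat) := exists x, k <= x /\
  (forall s, E1 s -> forall al, s al -> F s al = i -> a al x) /\
  (forall t, E2 t -> forall be, t be -> F t be = j -> a be x).
have goodS E1 E2 E1' E2' i j : E1' `<=` E1 -> E2' `<=` E2 ->
    good E1 E2 i j -> good E1' E2' i j.
  move=> s1 s2 [x [kx [h1 h2]]]; exists x; split => //; split.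
    by move=> s /s1; apply: h1.
  by move=> s /s2; apply: h2.
have Xu E1 i : E1 `<=` E -> ~ countable E1 -> i < n ->
   ~ countable [set al | exists2 s, E1 s & s al /\ F s al = i].
  move=> sE1 nE1 ilt cX; apply: nE1.
  pose g al := [set be | exists2 s, E s & s al /\ s be].
  have sub : E1 `<=` g @` [set al | exists2 s, E1 s & s al /\ F s al = i].
    move=> s E1s; have [_ _ /(_ i ilt) [al sal Fal]] := HF s (sE1 _ E1s).
    exists al; first by exists s.
    apply/seteqP; split => be.
      case=> s' Es' [s'al s'be]; have [<-//|ne] := pselect (s' = s).
      have := Edisj _ _ Es' (sE1 _ E1s) ne.
      by move=> /seteqP[/(_ al (conj s'al sal))].
    by move=> sbe; exists s => //; apply: sE1.
  apply: (sub_countable (subset_card_le sub)).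
  exact: (sub_countable (card_image_le _ _)).
have step E1 E2 i j : E1 `<=` E -> E2 `<=` E -> ~ countable E1 -> ~ countable E2 ->
    i < n -> j < n -> exists E1' E2', [/\ E1' `<=` E1, E2' `<=` E2,
      ~ countable E1', ~ countable E2' & good E1' E2' i j].
  move=> sE1 sE2 nE1 nE2 ilt jlt.
  have [x [kx h1 h2]] := @key _ _ k _ _ ainj NL (Xu _ _ sE1 nE1 ilt) (Xu _ _ sE2 nE2 jlt).
  exists [set s | E1 s /\ exists al, [/\ s al, F s al = i & a al x]].
  exists [set s | E2 s /\ exists al, [/\ s al, F s al = j & a al x]].
  split.
  - by move=> s [].
  - by move=> s [].
  - move=> c; apply: h1.
    apply: (sub_countable (subset_card_le (B := \bigcup_(s in [set s | E1 s /\ exists al, [/\ s al, F s al = i & a al x]]) s) _)).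
      move=> al [[s E1s [sal Fal]] alx]; exists s => //; split => //.
      by exists al.
    apply: bigcup_countable => // s [E1s _].
    by apply: finite_set_countable; exists n; apply: Ecard; apply: sE1.
  - move=> c; apply: h2.
    apply: (sub_countable (subset_card_le (B := \bigcup_(s in [set s | E2 s /\ exists al, [/\ s al, F s al = j & a al x]]) s) _)).
      move=> al [[s E1s [sal Fal]] alx]; exists s => //; split => //.
      by exists al.
    apply: bigcup_countable => // s [E1s _].
    by apply: finite_set_countable; exists n; apply: Ecard; apply: sE2.
  - exists x; split => //; split.
      move=> s [E1s [al' [sal' Fal' al'x]]] al sal Fal.
      have [inj _ _] := HF s (sE1 _ E1s).
      have -> : al = al' by apply: inj; rewrite ?inE //; rewrite Fal Fal'.
      by [].
    move=> s [E1s [al' [sal' Fal' al'x]]] al sal Fal.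
    have [inj _ _] := HF s (sE2 _ E1s).
    have -> : al = al' by apply: inj; rewrite ?inE //; rewrite Fal Fal'.
    by [].
have all_pairs (L : seq (nat * nat)) : all (fun p => (p.1 < n) && (p.2 < n)) L ->
   exists E1 E2, [/\ E1 `<=` E, E2 `<=` E, ~ countable E1, ~ countable E2 &
     forall p, p \in L -> good E1 E2 p.1 p.2].
  elim: L => [|[i j] L IH] /=.
    by move=> _; exists E, E; split.
  move=> /andP[/andP[ilt jlt] /IH[E1 [E2 [sE1 sE2 nE1 nE2 gL]]]].
  have [E1' [E2' [s1 s2 n1 n2 g]]] := step E1 E2 i j sE1 sE2 nE1 nE2 ilt jlt.
  exists E1', E2'; split => //.
  - by move=> s /s1 /sE1.
  - by move=> s /s2 /sE2.
  - move=> p; rewrite in_cons => /orP[/eqP -> //|pL].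
    by apply: goodS (gL p pL).
have [] := all_pairs [seq (i, j) | i <- iota 0 n, j <- iota 0 n].
  apply/allP => -[i j] /allpairsP[[i' j'] [/= + + [-> ->]]].
  by rewrite !mem_iota /= !add0n => -> ->.
move=> E1 [E2 [sE1 sE2 nE1 nE2 gL]].
have [s E1s] := @uncountable_ne _ _ nE1.
have [t [E2t ts]] : exists t, E2 t /\ t <> s.
  apply: contrapT => nt; apply: nE2.
  apply: (sub_countable (subset_card_le (B := [set s]) _)); last exact: countable1.
  move=> t E2t; apply: contrapT => ts; apply: nt; by exists t.
exists s, t; split; [exact: sE1 | exact: sE2 | by move=> e; apply: ts | ].
move=> al be sal tbe sub.
have [_ Fs _] := HF s (sE1 _ E1s).
have [_ Ft _] := HF t (sE2 _ E2t).
have /gL [x [kx [h1 h2]]] : (F s al, F t be) \in [seq (i, j) | i <- iota 0 n, j <- iota 0 n].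
  by apply: allpairs_f; rewrite mem_iota /= add0n ?Fs ?Ft.
have := sub x (conj (h1 s E1s al sal erefl) (h2 t E2t be tbe erefl)).
by rewrite /= ltnNge kx.
Qed.
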